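(* Assume $\mathfrak{r}=2^{\aleph_0}$. Then there is a uniform matroid $U$ on the ground set $\mathbb{N}$ such that the matroid family $(U,U)$ consisting of two copies of $U$ admits a packing and a covering, but does not admit a partitioning.
   Context: Matroids here are possibly infinite: a matroid is a pair $(E,\mathcal{I})$ with $\mathcal{I}\subseteq\mathcal{P}(E)$ such that (1) $\emptyset\in\mathcal{I}$; (2) $\mathcal{I}$ is closed under subsets; (3) for all $I,B\in\mathcal{I}$ with $B$ maximal in $\mathcal{I}$ and $I$ not maximal, there is $x\in B\setminus I$ with $I\cup\{x\}\in\mathcal{I}$; (4) for every $X\subseteq E$, every $I\in\mathcal{I}$ with $I\subseteq X$ extends to a maximal element of $\mathcal{I}\cap\mathcal{P}(X)$. Bases are maximal independent sets; circuits minimal dependent sets. A set $X$ spans $e$ if $e\in X$ or there is a circuit $C\ni e$ with $C\setminus\{e\}\subseteq X$; $S$ is spanning if it spans every element of $E$. A matroid is uniform if whenever $I$ is independent, $e\in I$ and $f\in E\setminus I$, then $(I\setminus\{e\})\cup\{f\}$ is independent. For a family $(M_i\colon i\in K)$ of matroids on $E$: a covering is a family $(R_i\colon i\in K)$ with $R_i$ independent in $M_i$ and $\bigcup_i R_i=E$; a packing is a family $(P_i\colon i\in K)$ of pairwise disjoint sets with $P_i$ spanning in $M_i$; a partitioning is a family $(B_i\colon i\in K)$ partitioning $E$ with each $B_i$ a base of $M_i$. The reaping number $\mathfrak{r}$ is the least cardinal such that there is a family $(A_i\colon i<\mathfrak{r})$ of infinite subsets of $\mathbb{N}$ for which no bipartition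 of $\mathbb{N}$ splits every $A_i$ into two infinite pieces. *)

(* Defs.v *)
From Stdlib Require Import Classical List.

Definition pset (E : Type) := E -> Prop.

Section Sets.
Context {E : Type}.
Definition subset (A B : pset E) : Prop := forall x, A x -> B x.
Definition empty : pset E := fun _ => False.
Definition union (A B : pset E) : pset E := fun x => A x \/ B x.
Definition setD (A B : pset E) : pset E := fun x => A x /\ ~ B x.
Definition single (e : E) : pset E := fun x => x = e.
Definition infinite (A : pset E) : Prop :=
  ~ exists l : list E, forall x, A x -> List.In x l.
End Sets.

Section Matroid.
Context {E : Type}.

Definition maximal (F : pset (pset E)) (B : pset E) : Prop :=
  F B /\ forall B', F B' -> subset B B' -> subset B' B.

Definition is_matroid (Ind : pset (pset E)) : Prop :=
  Ind empty /\
  (forall A B, Ind B -> subset A B -> Ind A) /\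
  (forall I B, Ind I -> maximal Ind B -> ~ maximal Ind I ->
     exists x, B x /\ ~ I x /\ Ind (union I (single x))) /\
  (forall X I, Ind I -> subset I X ->
     exists B, subset I B /\ maximal (fun Y => Ind Y /\ subset Y X) B).

Definition is_base (Ind : pset (pset E)) (B : pset E) : Prop := maximal Ind B.

Definition is_circuit (Ind : pset (pset E)) (C : pset E) : Prop :=
  ~ Ind C /\ forall D, ~ Ind D -> subset D C -> subset C D.

Definition spans (Ind : pset (pset E)) (X : pset E) (e : E) : Prop :=
  X e \/ exists C, is_circuit Ind C /\ C e /\ subset (setD C (single e)) X.

Definition spanning (Ind : pset (pset E)) (S : pset E) : Prop :=
  forall e, spans Ind S e.

Definition uniform (Ind : pset (pset E)) : Prop :=
  forall I e f, Ind I -> I e -> ~ I f ->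
    Ind (union (setD I (single e)) (single f)).

Definition has_covering {K : Type} (M : K -> pset (pset E)) : Prop :=
  exists R : K -> pset E, (forall i, M i (R i)) /\ (forall x, exists i, R i x).

Definition has_packing {K : Type} (M : K -> pset (pset E)) : Prop :=
  exists P : K -> pset E,
    (forall i j x, i <> j -> P i x -> P j x -> False) /\
    (forall i, spanning (M i) (P i)).

Definition has_partitioning {K : Type} (M : K -> pset (pset E)) : Prop :=
  exists B : K -> pset E,
    (forall i j x, i <> j -> B i x -> B j x -> False) /\
    (forall x, exists i, B i x) /\
    (forall i, is_base (M i) (B i)).
End Matroid.

Definition injective {A B : Type} (f : A -> B) : Prop :=
  forall x y, f x = f y -> x = y.
Definition bijective {A B : Type} (f : A -> B) : Prop :=
  injective f /\ forall y, exists x, f x = y.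

Definition card_le (A B : Type) : Prop := exists f : A -> B, injective f.
Definition card_eq (A B : Type) : Prop := exists f : A -> B, bijective f.

Definition splits (X A : pset nat) : Prop :=
  infinite (fun n => A n /\ X n) /\ infinite (fun n => A n /\ ~ X n).

Definition unsplit_family {I : Type} (A : I -> pset nat) : Prop :=
  (forall i, infinite (A i)) /\ ~ exists X : pset nat, forall i, splits X (A i).

(* r = 2^aleph0 : the least cardinality of an unsplit family equals |P(N)|,
   i.e. some unsplit family is indexed by a set of size |P(N)|, and every
   index set of an unsplit family has size >= |P(N)|. *)
Definition reaping_eq_continuum : Prop :=
  (exists (I : Type) (A : I -> pset nat), card_eq I (pset nat) /\ unsplit_family A) /\
  (forall (I : Type) (A : I -> pset nat), unsplit_family A -> card_le (pset nat) I).

(* Main.v *)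
Require Import Defs.
From Stdlib Require Import Classical ClassicalEpsilon FunctionalExtensionality List Arith Lia.
From mathcomp Require ssreflect ssrbool eqtype boolp wochoice.

Module WOM.
Import ssreflect ssrbool eqtype boolp wochoice.
Lemma wo_min (T : Type) (R : rel (classicType T)) : well_order R ->
  forall P : T -> Prop, (exists x, P x) -> exists z, P z /\ (forall x, P x -> R z x) /\
   (forall z', P z' -> (forall x, P x -> R z' x) -> z' = z).
Proof.
move=> wo P [x Px].
pose A : {pred classicType T} := fun y => `[< P y >].
have ne : nonempty A.
  by exists x; rewrite /A unfold_in /=; apply/asboolP.
case: (wo _ ne) => z [[Hz Hl] Hu].
exists z; split; first by move: Hz; rewrite unfold_in /A => /asboolP.
split.
  by move=> y Py; apply: Hl; rewrite unfold_in /A; apply/asboolP.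
move=> z' Pz' Hz'. symmetry; apply: Hu; split; first by rewrite unfold_in /A; apply/asboolP.
move=> y; rewrite unfold_in /A => /asboolP; exact: Hz'.
Qed.
Definition WOrel := proj1_sig (well_ordering_principle (classicType (pset nat))).
Lemma WOrel_wo : well_order WOrel. Proof. exact: proj2_sig (well_ordering_principle _). Qed.
Lemma WO : exists lt : pset nat -> pset nat -> Prop, well_founded lt /\
  (forall x y z, lt x y -> lt y z -> lt x z) /\ (forall x y, lt x y \/ x = y \/ lt y x).
Proof.
pose R : pset nat -> pset nat -> bool := WOrel.
have wm := @wo_min (pset nat) WOrel WOrel_wo.
have refl : forall x, R x x.
  move=> x; have [z [Pz [Hz _]]] := wm (fun y => y = x) (ex_intro _ x Logic.eq_refl).
  by subst z; apply: Hz.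
have tot : forall x y, R x y \/ R y x.
  move=> x y; have [z [Pz [Hz _]]] := wm (fun w => w = x \/ w = y) (ex_intro _ x (or_introl Logic.eq_refl)).
  case: Pz => <-; [left|right]; apply: Hz; auto.
have anti : forall x y, R x y -> R y x -> x = y.
  move=> x y Rxy Ryx.
  have [z [Pz [Hz Hu]]] := wm (fun w => w = x \/ w = y) (ex_intro _ x (or_introl Logic.eq_refl)).
  have ex : x = z by apply: Hu; [left | move=> w [->|->]; [apply: refl|]].
  have ey : y = z by apply: Hu; [right | move=> w [->|->]; [|apply: refl]].
  by rewrite ex ey.
have trans : forall x y z, R x y -> R y z -> R x z.
  move=> x y z Rxy Ryz.
  have [m [Pm [Hm _]]] := wm (fun w => w = x \/ w = y \/ w = z) (ex_intro _ x (or_introl Logic.eq_refl)).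
  case: Pm => [<-|[em|em]]; first by apply: Hm; auto.
    have Ryx : R y x by rewrite -em; apply: Hm; auto.
    by rewrite (anti x y Rxy Ryx).
  have Rzy : R z y by rewrite -em; apply: Hm; auto.
  by rewrite -(anti y z Ryz Rzy).
exists (fun x y => R x y /\ x <> y); split; last split.
- move=> a; apply: NNPP => nacc.
  have [z [Pz [Hz _]]] := wm (fun w => ~ Acc (fun x y => R x y /\ x <> y) w) (ex_intro _ a nacc).
  apply: Pz; constructor => y [Ryz nyz]; apply: NNPP => ny.
  by apply: nyz; apply: anti => //; apply: Hz.
- move=> x y z [Rxy nxy] [Ryz nyz]; split; first exact: trans Rxy Ryz.
  move=> exz; subst z; by apply: nxy; apply: anti.
- move=> x y; case: (Classical_Prop.classic (x = y)) => [->|nxy]; first by right; left.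
  by case: (tot x y) => H; [left|right;right]; split => //; move=> e; apply: nxy.
Qed.
End WOM.

Definition fin (A : pset nat) : Prop := exists l : list nat, forall x, A x -> In x l.
Definition ssub (A B : pset nat) : Prop := fin (fun x => A x /\ ~ B x).

Lemma fin_mono (A B : pset nat) : (forall x, A x -> B x) -> fin B -> fin A.
Proof. intros H [l Hl]. exists l. auto. Qed.

Lemma fin_union (A B : pset nat) : fin A -> fin B -> fin (fun x => A x \/ B x).
Proof.
  intros [l1 H1] [l2 H2]. exists (l1 ++ l2). intros x [Hx|Hx]; apply in_or_app; auto.
Qed.

Lemma inf_mono (A B : pset nat) : (forall x, A x -> B x) -> infinite A -> infinite B.
Proof. intros H HA HB. apply HA. exact (fin_mono A B H HB). Qed.

Lemma fin_cover (A B C : pset nat) : (forall x, A x -> B x \/ C x) -> fin B -> fin C -> fin A.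
Proof. intros H HB HC. apply (fin_mono A (fun x => B x \/ C x)); auto. apply fin_union; auto. Qed.


Lemma ssub_trans A B C : ssub A B -> ssub B C -> ssub A C.
Proof.
  intros H1 H2. unfold ssub in *.
  apply (fin_cover _ (fun x => A x /\ ~ B x) (fun x => B x /\ ~ C x)); auto.
  intros x [Ax nCx]. destruct (classic (B x)); tauto.
Qed.

Lemma ssub_of_sub A B : subset A B -> ssub A B.
Proof. intros H. exists nil. intros x [Ax nBx]. exfalso. auto. Qed.

Lemma fin_ssub A B : fin A -> ssub A B.
Proof. intros H. apply (fin_mono _ A); tauto. Qed.

Lemma bound_list (l : list nat) : exists n, forall x, In x l -> x < n.
Proof.
  induction l as [|a l [n IH]].
  - exists 0. intros x [].
  - exists (S (a + n)). intros x [<-|Hx]; [lia|]. specialize (IH x Hx). lia.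
Qed.

Lemma nat_inf : infinite (fun _ : nat => True).
Proof. intros [l Hl]. destruct (bound_list l) as [n Hn]. specialize (Hn n (Hl n I)). lia. Qed.

Lemma res_inf (r : nat) : r < 6 -> infinite (fun n => n mod 6 = r).
Proof.
  intros Hr [l Hl]. destruct (bound_list l) as [n Hn].
  assert (E : (r + n * 6) mod 6 = r).
  { rewrite Nat.Div0.mod_add. apply Nat.mod_small; auto. }
  specialize (Hn _ (Hl _ E)). lia.
Qed.

Lemma ssub_res (A B : pset nat) (r : nat) : r < 6 ->
  (forall n, n mod 6 = r -> A n /\ ~ B n) -> ~ ssub A B.
Proof. intros Hr H Hs. apply (res_inf r Hr). apply (fin_mono _ _ H Hs). Qed.

Definition compl (A : pset nat) : pset nat := fun x => ~ A x.
Definition incomp A B := ~ ssub A B /\ ~ ssub B A.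
Definition cfree (A B : pset nat) := ~ (fin (fun x => A x /\ B x) /\ fin (fun x => ~ A x /\ ~ B x)).

Lemma cfree_sym A B : cfree A B -> cfree B A.
Proof.
  intros H [H1 H2]. apply H. split.
  - apply (fin_mono _ _ (fun x h => conj (proj2 h) (proj1 h)) H1).
  - apply (fin_mono _ _ (fun x h => conj (proj2 h) (proj1 h)) H2).
Qed.


Lemma cfree_refl A : cfree A A.
Proof.
  intros [H1 H2]. apply nat_inf.
  apply (fin_cover _ (fun x => A x /\ A x) (fun x => ~ A x /\ ~ A x)); auto.
  intros x _. destruct (classic (A x)); tauto.
Qed.

Definition P0 : pset nat := fun n => n mod 6 = 0 \/ n mod 6 = 1.
Definition P1 : pset nat := fun n => n mod 6 = 2 \/ n mod 6 = 3.
Definition C0 : pset nat := fun n => n mod 6 = 0 \/ n mod 6 = 2 \/ n mod 6 = 4 \/ n mod 6 = 5.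
Definition C1 : pset nat := fun n => n mod 6 = 1 \/ n mod 6 = 3 \/ n mod 6 = 4 \/ n mod 6 = 5.
Definition seed (Z : pset nat) : Prop := Z = P0 \/ Z = P1 \/ Z = C0 \/ Z = C1.

Ltac seed_res r := apply (ssub_res _ _ r); [lia| intros n Hn; unfold P0, P1, C0, C1; lia].

Lemma seed_antichain A B : seed A -> seed B -> ssub A B -> A = B.
Proof.
  intros [ -> | [ -> | [ -> | -> ] ] ] [ -> | [ -> | [ -> | -> ] ] ] H; try reflexivity; exfalso; revert H.
  all: first [seed_res 0 | seed_res 1 | seed_res 2 | seed_res 3 | seed_res 4 | seed_res 5].
Qed.

Lemma cfree_res1 A B r : r < 6 -> (forall n, n mod 6 = r -> A n /\ B n) -> cfree A B.
Proof. intros Hr H [H1 _]. apply (res_inf r Hr). exact (fin_mono _ _ H H1). Qed.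
Lemma cfree_res2 A B r : r < 6 -> (forall n, n mod 6 = r -> ~ A n /\ ~ B n) -> cfree A B.
Proof. intros Hr H [_ H1]. apply (res_inf r Hr). exact (fin_mono _ _ H H1). Qed.

Lemma seed_cfree A B : seed A -> seed B -> cfree A B.
Proof.
  intros [ -> | [ -> | [ -> | -> ] ] ] [ -> | [ -> | [ -> | -> ] ] ];
  first [ apply (cfree_res1 _ _ 0); [lia| intros n Hn; unfold P0, P1, C0, C1; lia]
        | apply (cfree_res1 _ _ 1); [lia| intros n Hn; unfold P0, P1, C0, C1; lia]
        | apply (cfree_res1 _ _ 2); [lia| intros n Hn; unfold P0, P1, C0, C1; lia]
        | apply (cfree_res1 _ _ 3); [lia| intros n Hn; unfold P0, P1, C0, C1; lia]
        | apply (cfree_res1 _ _ 4); [lia| intros n Hn; unfold P0, P1, C0, C1; lia]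
        | apply (cfree_res1 _ _ 5); [lia| intros n Hn; unfold P0, P1, C0, C1; lia]
        | apply (cfree_res2 _ _ 4); [lia| intros n Hn; unfold P0, P1, C0, C1; lia] ].
Qed.

Definition sat (Mid : pset (pset nat)) (I X : pset nat) : Prop :=
  (exists M, Mid M /\ ssub I M /\ ssub M X) \/
  (exists M, Mid M /\ ssub X M /\ ~ ssub M X) \/
  (exists M, Mid M /\ ssub M I /\ ~ ssub I M).

Definition rem := remove Nat.eq_dec.

Lemma in_rem x y l : In x (rem y l) <-> In x l /\ x <> y.
Proof. split; [apply in_remove | intros [H1 H2]; apply in_in_remove; auto]. Qed.

Lemma NoDup_rem y l : NoDup l -> NoDup (rem y l).
Proof.
  induction l as [|a l IH]; intros H; simpl; [constructor|].
  inversion H; subst. destruct (Nat.eq_dec y a); auto.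
  constructor; auto. rewrite in_rem. tauto.
Qed.

Lemma len_rem y l : NoDup l -> In y l -> S (length (rem y l)) = length l.
Proof.
  induction l as [|a l IH]; intros H Hy; [destruct Hy|]. inversion H; subst. simpl.
  destruct (Nat.eq_dec y a) as [e|ne].
  - subst. unfold rem. rewrite notin_remove; auto.
  - simpl. destruct Hy as [e|Hy]; [congruence|]. rewrite IH; auto.
Qed.

Section Mat.
Variable F : pset (pset nat).

Definition base (B : pset nat) : Prop :=
  exists M, F M /\ exists lf lg : list nat, NoDup lf /\ NoDup lg /\ length lf = length lg /\
    (forall x, In x lf -> M x) /\ (forall x, In x lg -> ~ M x) /\
    (forall x, B x <-> (M x /\ ~ In x lf) \/ In x lg).

Definition Ind (I : pset nat) : Prop := exists B, base B /\ subset I B.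

Lemma base_self M : F M -> base M.
Proof.
  intros HM. exists M. split; auto. exists nil, nil. simpl.
  repeat split; try constructor; try tauto.
Qed.

Lemma base_ext B B' : base B -> (forall x, B x <-> B' x) -> base B'.
Proof.
  intros [M [HM [lf [lg [H1 [H2 [H3 [H4 [H5 H6]]]]]]]]] E.
  exists M. split; auto. exists lf, lg. repeat split; auto.
  - intros Hx. apply H6. apply E. auto.
  - intros Hx. apply E. apply H6. auto.
Qed.

Lemma base_class B : base B -> exists M, F M /\ ssub B M /\ ssub M B.
Proof.
  intros [M [HM [lf [lg [H1 [H2 [H3 [H4 [H5 H6]]]]]]]]].
  exists M. split; auto. split.
  - exists lg. intros x [Bx nMx]. apply H6 in Bx. tauto.
  - exists lf. intros x [Mx nBx]. destruct (classic (In x lf)); auto. exfalso. apply nBx, H6. tauto.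
Qed.

Definition swap (B : pset nat) (e f : nat) : pset nat := fun x => (B x /\ x <> e) \/ x = f.

Ltac swap_iff H4 H5 H6 e f :=
  let x := fresh "x" in
  intro x; specialize (H6 x); pose proof (H4 x); pose proof (H5 x);
  destruct (Nat.eq_dec x e); destruct (Nat.eq_dec x f); subst; simpl; rewrite ?in_rem;
  intuition (try congruence).

Lemma base_swap B e f : base B -> B e -> ~ B f -> base (swap B e f).
Proof.
  intros [M [HM [lf [lg [H1 [H2 [H3 [H4 [H5 H6]]]]]]]]] Be nBf.
  assert (nef : e <> f) by (intro; subst; auto).
  pose proof (proj1 (H6 e) Be) as Be'. assert (nBf' := fun h => nBf (proj2 (H6 f) h)).
  unfold swap. exists M. split; auto.
  destruct (classic (In e lg)) as [elg|nelg]; destruct (classic (M f)) as [Mf|nMf].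
  - assert (flf : In f lf) by (destruct (classic (In f lf)); tauto).
    assert (Me : ~ M e) by (apply H5; auto).
    exists (rem f lf), (rem e lg). repeat split.
    + apply NoDup_rem; auto.
    + apply NoDup_rem; auto.
    + apply len_rem in flf; auto. apply len_rem in elg; auto. lia.
    + intros x Hx. apply in_rem in Hx. apply H4. tauto.
    + intros x Hx. apply in_rem in Hx. apply H5. tauto.
    + revert x. swap_iff H4 H5 H6 e f.
    + revert x. swap_iff H4 H5 H6 e f.
  - assert (nflg : ~ In f lg) by tauto.
    assert (Me : ~ M e) by (apply H5; auto).
    exists lf, (f :: rem e lg). repeat split; auto.
    + constructor; [rewrite in_rem; tauto | apply NoDup_rem; auto].
    + simpl. apply len_rem in elg; auto. lia.
    + intros x [<-|Hx]; auto. apply in_rem in Hx. apply H5. tauto.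
    + revert x. swap_iff H4 H5 H6 e f.
    + revert x. swap_iff H4 H5 H6 e f.
  - assert (Me : M e /\ ~ In e lf) by tauto.
    assert (flf : In f lf) by (destruct (classic (In f lf)); tauto).
    exists (e :: rem f lf), lg. repeat split; auto.
    + constructor; [rewrite in_rem; tauto | apply NoDup_rem; auto].
    + simpl. apply len_rem in flf; auto. lia.
    + intros x [<-|Hx]; [tauto|]. apply in_rem in Hx. apply H4. tauto.
    + revert x. swap_iff H4 H5 H6 e f.
    + revert x. swap_iff H4 H5 H6 e f.
  - assert (Me : M e /\ ~ In e lf) by tauto.
    assert (nflg : ~ In f lg) by tauto.
    exists (e :: lf), (f :: lg). repeat split; auto.
    + constructor; tauto.
    + constructor; tauto.
    + simpl; lia.
    + intros x [<-|Hx]; [tauto|auto].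
    + intros x [<-|Hx]; [tauto|auto].
    + revert x. swap_iff H4 H5 H6 e f.
    + revert x. swap_iff H4 H5 H6 e f.
Qed.


Hypothesis Hseed : forall Z, seed Z -> F Z.
Hypothesis Hac : forall A B, F A -> F B -> ssub A B -> A = B.
Hypothesis Hcf : forall A B, F A -> F B -> cfree A B.
Hypothesis Hsat : forall I X, subset I X -> sat F I X.

Lemma base_anti B1 B2 : base B1 -> base B2 -> subset B1 B2 -> subset B2 B1.
Proof.
  intros [M1 [HM1 [lf1 [lg1 [H1 [H2 [H3 [H4 [H5 H6]]]]]]]]]
         [M2 [HM2 [lf2 [lg2 [K1 [K2 [K3 [K4 [K5 K6]]]]]]]]] Hs.
  assert (E : M1 = M2).
  { apply Hac; auto. exists (lf1 ++ lg2). intros x [Mx nMx]. apply in_or_app.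
    destruct (classic (In x lf1)); auto. right.
    assert (B1 x) by (apply H6; tauto). apply Hs in H0. apply K6 in H0. tauto. }
  subst M2.
  assert (i1 : incl lg1 lg2).
  { intros x Hx. assert (B1 x) by (apply H6; tauto). apply Hs, K6 in H. specialize (H5 x Hx). tauto. }
  assert (i2 : incl lf2 lf1).
  { intros x Hx. destruct (classic (In x lf1)); auto. exfalso.
    assert (B1 x) by (apply H6; left; split; auto). apply Hs, K6 in H0.
    specialize (K4 x Hx). specialize (K5 x). tauto. }
  pose proof (NoDup_incl_length H2 i1). pose proof (NoDup_incl_length K1 i2).
  assert (i3 : incl lf1 lf2) by (apply NoDup_length_incl; auto; lia).
  assert (i4 : incl lg2 lg1) by (apply NoDup_length_incl; auto; lia).
  intros x Bx. apply K6 in Bx. apply H6.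
  destruct Bx as [[Mx nx]|gx]; [left; split; auto | right; auto].
Qed.

Lemma base_Ind B : base B -> Ind B.
Proof. intros H. exists B. split; auto. intros x h; exact h. Qed.

Lemma maximal_base B : maximal Ind B <-> base B.
Proof.
  split.
  - intros [[B1 [HB1 Hs]] Hm]. apply (base_ext B1); auto.
    intros x; split; [apply Hm; auto; apply base_Ind; auto | apply Hs].
  - intros HB. split; [apply base_Ind; auto|].
    intros B' [B1 [HB1 Hs]] Hs'. intros x Hx. apply (base_anti B B1 HB HB1).
    + intros y Hy. apply Hs, Hs'. exact Hy.
    + apply Hs, Hx.
Qed.

Lemma Ind_sub A B : Ind B -> subset A B -> Ind A.
Proof. intros [B1 [H1 H2]] H. exists B1. split; auto. intros x Hx. apply H2, H, Hx. Qed.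

Lemma augment (I X : pset nat) : subset I X -> (forall B, base B -> subset B I -> subset I B) ->
  forall n B (a b : list nat), base B -> length a + length b <= n ->
  (forall x, I x -> ~ B x -> In x a) -> (forall x, B x -> ~ X x -> In x b) ->
  (exists B', base B' /\ subset I B' /\ subset B' X) \/ Ind X.
Proof.
  intros HIX HI n. induction n as [|n IH]; intros B a b HB Hlen Ha Hb.
  - left. exists B. split; auto. split.
    + intros x Ix. destruct (classic (B x)); auto. specialize (Ha x Ix H).
      destruct a; [destruct Ha| simpl in Hlen; lia].
    + intros x Bx. destruct (classic (X x)); auto. specialize (Hb x Bx H).
      destruct b; [destruct Hb| simpl in Hlen; lia].
  - destruct (classic (exists x, I x /\ ~ B x)) as [[x [Ix nBx]]|nIB].
    + destruct (classic (exists y, B y /\ ~ X y)) as [[y [By nXy]]|nBX].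
      * assert (nIy : ~ I y) by (intro h; apply nXy, HIX, h).
        apply (IH (swap B y x) (rem x a) (rem y b)).
        -- apply base_swap; auto.
        -- pose proof (remove_length_lt Nat.eq_dec a x (Ha x Ix nBx)).
           pose proof (remove_length_lt Nat.eq_dec b y (Hb y By nXy)). unfold rem. lia.
        -- intros z Iz nz. unfold swap in nz. apply in_rem. split.
           ++ apply Ha; auto. intro. apply nz. left. split; auto. intro; subst; auto.
           ++ intro; subst; auto.
        -- intros z Bz nXz. unfold swap in Bz. apply in_rem.
           destruct Bz as [[Bz nzy]|zx]; [split; auto| subst; exfalso; auto].
      * destruct (classic (exists w, B w /\ ~ I w)) as [[w [Bw nIw]]|nBI].
        -- apply (IH (swap B w x) (rem x a) b).
           ++ apply base_swap; auto.
           ++ pose proof (remove_length_lt Nat.eq_dec a x (Ha x Ix nBx)). unfold rem. lia.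
           ++ intros z Iz nz. unfold swap in nz. apply in_rem. split.
              ** apply Ha; auto. intro. apply nz. left. split; auto. intro; subst; auto.
              ** intro; subst; auto.
           ++ intros z Bz nXz. unfold swap in Bz. destruct Bz as [[Bz _]|zx]; auto.
              subst. exfalso. auto.
        -- exfalso. apply nBx. apply (HI B HB); auto.
           intros z Bz. destruct (classic (I z)); auto. exfalso; apply nBI; eauto.
    + destruct (classic (exists y, B y /\ ~ X y)) as [[y [By nXy]]|nBX].
      * destruct (classic (exists z, X z /\ ~ B z)) as [[z [Xz nBz]]|nXB].
        -- assert (nIy : ~ I y) by (intro h; apply nXy, HIX, h).
           apply (IH (swap B y z) a (rem y b)).
           ++ apply base_swap; auto.
           ++ pose proof (remove_length_lt Nat.eq_dec b y (Hb y By nXy)). unfold rem. lia.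
           ++ intros t It nt. exfalso. apply nIB. exists t. split; auto.
              intro. apply nt. left. split; auto. intro; subst; auto.
           ++ intros t Bt nXt. unfold swap in Bt. apply in_rem.
              destruct Bt as [[Bt nty]|tz]; [split; auto| subst; exfalso; auto].
        -- right. exists B. split; auto. intros t Xt. destruct (classic (B t)); auto.
           exfalso; apply nXB; eauto.
      * left. exists B. split; auto. split.
        -- intros t It. destruct (classic (B t)); auto. exfalso; apply nIB; eauto.
        -- intros t Bt. destruct (classic (X t)); auto. exfalso; apply nBX; eauto.
Qed.


Lemma finish4 (I X : pset nat) : subset I X ->
  (exists B', base B' /\ subset I B' /\ subset B' X) \/ Ind X ->
  exists B, subset I B /\ maximal (fun Y => Ind Y /\ subset Y X) B.
Proof.
  intros HIX [[B' [HB' [H1 H2]]]|HX].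
  - exists B'. split; auto. split; [split; auto; apply base_Ind; auto|].
    intros B'' [[B2 [HB2 Hs2]] _] Hs. intros x Hx.
    apply (base_anti B' B2 HB' HB2); [intros y Hy; apply Hs2, Hs, Hy | apply Hs2, Hx].
  - exists X. split; auto. split; [split; auto; intros x h; exact h|].
    intros B'' [_ H] _. exact H.
Qed.

Lemma Ind_matroid : is_matroid Ind.
Proof.
  split; [|split; [|split]].
  - exists P0. split; [apply base_self; apply Hseed; left; auto | intros x []].
  - intros A B HB HAB. apply (Ind_sub A B HB HAB).
  - intros I B HI HB nI. apply maximal_base in HB. destruct HI as [B1 [HB1 HIB1]].
    assert (Hy : exists y, B1 y /\ ~ I y).
    { apply NNPP. intro ny. apply nI. apply maximal_base. apply (base_ext B1); auto.
      intros x. split; auto. intro Bx. apply NNPP. intro nx. apply ny. eauto. }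
    destruct Hy as [y [B1y nIy]].
    assert (Hx : exists x, B x /\ ~ I x).
    { apply NNPP. intro nx. apply nIy.
      assert (BI : subset B I) by (intros z Bz; apply NNPP; intro; apply nx; eauto).
      apply BI. apply (base_anti B B1 HB HB1); auto. intros z Bz. apply HIB1, BI, Bz. }
    destruct Hx as [x [Bx nIx]]. exists x. split; auto. split; auto.
    destruct (classic (B1 x)) as [B1x|nB1x].
    + exists B1. split; auto. intros z [Iz|ez]; [apply HIB1; auto | unfold single in ez; subst; auto].
    + exists (swap B1 y x). split; [apply base_swap; auto|].
      intros z [Iz|ez]; unfold swap; [left; split; [apply HIB1; auto| intro; subst; auto] | right; exact ez].
  - intros X I HI HIX. apply finish4; auto.
    destruct (Hsat I X HIX) as [[M [FM [[a Ha] [b Hb]]]]|[[M [FM [[a Ha] nMX]]]|[M [FM [HMI nIM]]]]].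
    + assert (HIh : forall B, base B -> subset B I -> subset I B).
      { intros B HB HBI. destruct HI as [B1 [HB1 HIB1]]. intros z Iz.
        apply (base_anti B B1 HB HB1); [intros t Bt; apply HIB1, HBI, Bt | apply HIB1, Iz]. }
      apply (augment I X HIX HIh (length a + length b) M a b (base_self M FM) (le_n _)).
      * intros x Ix nMx. apply Ha. auto.
      * intros x Mx nXx. apply Hb. auto.
    + right.
      assert (HI' : forall B, base B -> subset B X -> subset X B).
      { intros B HB HBX. exfalso. destruct (base_class B HB) as [M1 [FM1 [HBM1 HM1B]]].
        assert (ssub M1 M).
        { apply (ssub_trans _ B); auto. apply (ssub_trans _ X); [apply ssub_of_sub; auto|].
          exists a; intros x h; apply Ha; exact h. }
        assert (E := Hac M1 M FM1 FM H). subst M1. apply nMX.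
        apply (ssub_trans _ B); auto. apply ssub_of_sub; auto. }
      assert (Hr : (exists B', base B' /\ subset X B' /\ subset B' (fun _ => True)) \/ Ind (fun _ => True)).
      { apply (augment X (fun _ => True) (fun _ _ => Logic.I) HI' (length a + 0) M a nil
                 (base_self M FM) (le_n _)).
        - intros x Xx nMx. apply Ha; auto.
        - intros x _ h. exfalso; auto. }
      destruct Hr as [[B' [HB' [H1 _]]]|HT].
      * exists B'. auto.
      * apply (Ind_sub _ _ HT). intros x _; exact Logic.I.
    + exfalso. destruct HI as [B1 [HB1 HIB1]]. destruct (base_class B1 HB1) as [M1 [FM1 [HBM1 HM1B]]].
      assert (ssub M M1).
      { apply (ssub_trans _ I); auto. apply (ssub_trans _ B1); auto. apply ssub_of_sub; auto. }
      assert (E := Hac M M1 FM FM1 H). subst M1. apply nIM.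
      apply (ssub_trans _ B1); auto. apply ssub_of_sub; auto.
Qed.

Lemma Ind_uniform : uniform Ind.
Proof.
  intros I e f [B [HB HIB]] Ie nIf.
  destruct (classic (B f)) as [Bf|nBf].
  - exists B. split; auto. intros x [[Ix _]|xf]; [apply HIB; auto| unfold single in xf; subst; auto].
  - exists (swap B e f). split; [apply base_swap; auto|].
    intros x [[Ix nxe]|xf]; unfold swap; [left; split; [apply HIB; auto| exact nxe] | right; exact xf].
Qed.

Lemma spanning_base B : base B -> spanning Ind B.
Proof.
  intros HB e. destruct (classic (B e)) as [Be|nBe]; [left; auto|right].
  exists (fun x => B x \/ x = e). split; [split|split].
  - intros [B1 [HB1 Hs]]. apply nBe. apply (base_anti B B1 HB HB1); [intros x Bx; apply Hs; left; auto|].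
    apply Hs. right; auto.
  - intros D nD DC c Cc. apply NNPP. intro nDc. apply nD.
    destruct (Nat.eq_dec c e) as [->|nce].
    + exists B. split; auto. intros x Dx. destruct (DC x Dx); auto. subst. contradiction.
    + exists (swap B c e). split.
      * apply base_swap; auto. destruct Cc; [auto| contradiction].
      * intros x Dx. unfold swap. destruct (DC x Dx) as [Bx|xe]; [left; split; auto| right; auto].
        intro; subst; contradiction.
  - right; auto.
  - intros x [[Bx|xe] nxe]; auto. contradiction.
Qed.

Lemma mat_main : exists U : pset (pset nat),
    is_matroid U /\ uniform U /\
    has_packing (fun _ : bool => U) /\
    has_covering (fun _ : bool => U) /\
    ~ has_partitioning (fun _ : bool => U).
Proof.
  exists Ind. split; [apply Ind_matroid|]. split; [apply Ind_uniform|]. split; [|split].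
  - exists (fun b : bool => if b then P0 else P1). split.
    + intros [|] [|] x nij; try congruence; unfold P0, P1; simpl; lia.
    + intros [|]; apply spanning_base, base_self, Hseed; unfold seed; auto.
  - exists (fun b : bool => if b then C0 else C1). split.
    + intros [|]; apply base_Ind, base_self, Hseed; unfold seed; auto.
    + intros x. pose proof (Nat.mod_upper_bound x 6 ltac:(lia)).
      assert (x mod 6 = 0 \/ x mod 6 = 1 \/ x mod 6 = 2 \/ x mod 6 = 3 \/ x mod 6 = 4 \/ x mod 6 = 5) by lia.
      destruct H0 as [h|[h|[h|[h|[h|h]]]]];
      first [exists true; simpl; unfold C0; lia | exists false; simpl; unfold C1; lia].
  - intros [Bp [Hdis [Hcov Hb]]].
    pose proof (proj1 (maximal_base _) (Hb true)) as Ht.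
    pose proof (proj1 (maximal_base _) (Hb false)) as Hf.
    destruct Ht as [Mt [FMt [lft [lgt [_ [_ [_ [_ [_ Et]]]]]]]]].
    destruct Hf as [Mf [FMf [lff [lgf [_ [_ [_ [_ [_ Ef]]]]]]]]].
    apply (Hcf Mt Mf FMt FMf). split.
    + exists (lft ++ lff). intros x [Mtx Mfx]. apply in_or_app.
      destruct (classic (In x lft)); auto. destruct (classic (In x lff)); auto. exfalso.
      apply (Hdis true false x); [congruence| apply Et; tauto | apply Ef; tauto].
    + exists (lgt ++ lgf). intros x [nMt nMf]. apply in_or_app.
      destruct (Hcov x) as [[|] Hx]; [apply Et in Hx | apply Ef in Hx]; tauto.
Qed.

End Mat.

Definition small (K : Type) : Prop := ~ card_le (pset nat) K.

Definition pr (A B : pset nat) : pset nat :=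
  fun n => if Nat.even n then A (Nat.div2 n) else B (Nat.div2 n).

Lemma pr_l A B m : pr A B (2 * m) = A m.
Proof. unfold pr. rewrite Nat.even_even, Nat.div2_double. reflexivity. Qed.

Lemma pr_r A B m : pr A B (S (2 * m)) = B m.
Proof.
  unfold pr. rewrite Nat.div2_succ_double.
  replace (Nat.even (S (2 * m))) with false; [reflexivity|].
  rewrite <- Nat.add_1_r, Nat.even_odd. reflexivity.
Qed.

Lemma pr_inj A B A' B' : pr A B = pr A' B' -> A = A' /\ B = B'.
Proof.
  intros E. split; apply functional_extensionality; intro m.
  - rewrite <- (pr_l A B m), <- (pr_l A' B' m), E. reflexivity.
  - rewrite <- (pr_r A B m), <- (pr_r A' B' m), E. reflexivity.
Qed.

Lemma small_option K : small K -> small (option K).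
Proof.
  intros HK [f Hf]. apply HK.
  set (e := fun (A : pset nat) (b : Prop) => (fun n => match n with 0 => b | S m => A m end) : pset nat).
  assert (einj : forall A b A' b', e A b = e A' b' -> A = A').
  { intros A b A' b' E. apply functional_extensionality. intro m.
    exact (f_equal (fun g => g (S m)) E). }
  assert (Hex : forall A, exists k, f (e A False) = Some k \/ f (e A True) = Some k).
  { intros A. destruct (f (e A False)) as [k|] eqn:E1; [exists k; auto|].
    destruct (f (e A True)) as [k|] eqn:E2; [exists k; auto|].
    exfalso. rewrite <- E2 in E1. apply Hf in E1.
    assert (FT : False = True) by exact (f_equal (fun g => g 0) E1).
    rewrite FT. exact Logic.I. }
  exists (fun A => proj1_sig (constructive_indefinite_description _ (Hex A))).
  intros A A' E.
  destruct (constructive_indefinite_description _ (Hex A)) as [k Hk].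
  destruct (constructive_indefinite_description _ (Hex A')) as [k' Hk']. simpl in E. subst k'.
  destruct Hk as [Hk|Hk]; destruct Hk' as [Hk'|Hk']; rewrite <- Hk' in Hk; apply Hf in Hk; eapply einj; eauto.
Qed.

Lemma small_prodb K : small K -> small (K * bool).
Proof.
  intros HK [f Hf]. apply HK.
  destruct (classic (forall A, exists B, snd (f (pr A B)) = true)) as [H|H].
  - exists (fun A => fst (f (pr A (proj1_sig (constructive_indefinite_description _ (H A)))))).
    intros A A' E.
    destruct (constructive_indefinite_description _ (H A)) as [B HB].
    destruct (constructive_indefinite_description _ (H A')) as [B' HB']. simpl in E.
    assert (f (pr A B) = f (pr A' B')).
    { rewrite (surjective_pairing (f (pr A B))), (surjective_pairing (f (pr A' B'))), E, HB, HB'.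
      reflexivity. }
    apply Hf, pr_inj in H0. tauto.
  - apply not_all_ex_not in H. destruct H as [A0 HA0].
    assert (Hn : forall B, snd (f (pr A0 B)) = false).
    { intros B. destruct (snd (f (pr A0 B))) eqn:E; auto. exfalso. apply HA0. eauto. }
    exists (fun B => fst (f (pr A0 B))). intros B B' E.
    assert (f (pr A0 B) = f (pr A0 B')).
    { rewrite (surjective_pairing (f (pr A0 B))), (surjective_pairing (f (pr A0 B'))), E, !Hn.
      reflexivity. }
    apply Hf, pr_inj in H. tauto.
Qed.

Lemma small_cover K (c : K -> pset nat) (Mid : pset (pset nat)) :
  small K -> (forall Z, Mid Z -> exists k, c k = Z) -> small {Z | Mid Z}.
Proof.
  intros HK Hc [f Hf]. apply HK.
  exists (fun A => proj1_sig (constructive_indefinite_description _ (Hc _ (proj2_sig (f A))))).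
  intros A A' E.
  destruct (constructive_indefinite_description _ (Hc _ (proj2_sig (f A)))) as [k Hk].
  destruct (constructive_indefinite_description _ (Hc _ (proj2_sig (f A')))) as [k' Hk'].
  simpl in E. subst k'. rewrite Hk in Hk'. apply Hf.
  destruct (f A) as [Z p], (f A') as [Z' p']. simpl in Hk'. subst Z'.
  f_equal. apply proof_irrelevance.
Qed.

Lemma splitter (H : reaping_eq_continuum) K (A : K -> pset nat) :
  small K -> (forall k, infinite (A k)) -> exists S, forall k, splits S (A k).
Proof.
  intros HK HA. destruct H as [_ H2]. apply NNPP. intro nS. apply HK.
  apply (H2 K A). split; auto.
Qed.

Definition witness (Mid : pset (pset nat)) (A : pset nat) : Prop :=
  exists W, Mid W /\ ((ssub W (compl A) /\ ~ ssub (compl A) W) \/ (ssub (compl A) W /\ ~ ssub W (compl A))).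
Definition addp (Mid : pset (pset nat)) (M M2 : pset nat) : pset (pset nat) :=
  fun Z => Mid Z \/ Z = M \/ Z = M2.
Definition good (Mid : pset (pset nat)) (I X : pset nat) (p : pset nat * pset nat) : Prop :=
  subset I (fst p) /\ subset (fst p) X /\
  (forall M', Mid M' -> incomp (fst p) M' /\ cfree (fst p) M' /\ incomp (snd p) M' /\ cfree (snd p) M') /\
  (snd p = fst p \/ incomp (fst p) (snd p)) /\ cfree (fst p) (snd p) /\
  witness (addp Mid (fst p) (snd p)) (fst p) /\ witness (addp Mid (fst p) (snd p)) (snd p).

Definition xm (P : Prop) : {P} + {~ P} := excluded_middle_informative P.

Section Step.
Hypothesis Hr : reaping_eq_continuum.
Variables (Mid : pset (pset nat)) (I X : pset nat).
Hypothesis Hseed : forall Z, seed Z -> Mid Z.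
Hypothesis Hsm : small {Z | Mid Z}.
Hypothesis Hwit : forall M', Mid M' -> witness Mid M'.
Hypothesis HIX : subset I X.
Hypothesis Hns : ~ sat Mid I X.

Let D : pset nat := fun n => X n /\ ~ I n.

Lemma ns1 M' : Mid M' -> ssub I M' -> ssub M' X -> False.
Proof. intros; apply Hns; left; eauto. Qed.
Lemma ns2 M' : Mid M' -> ssub X M' -> ssub M' X.
Proof. intros HM h. apply NNPP. intro n. apply Hns; right; left; eauto. Qed.
Lemma ns3 M' : Mid M' -> ssub M' I -> ssub I M'.
Proof. intros HM h. apply NNPP. intro n. apply Hns; right; right; eauto. Qed.

Lemma mid_inf M' : Mid M' -> infinite M'.
Proof.
  intros HM Hf. apply (ns1 M' HM); [apply ns3; auto|]; apply fin_ssub; auto.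
Qed.

Definition Z1 (M' : pset nat) : pset nat :=
  if xm (ssub I M') then (fun n => D n /\ ~ M' n)
  else if xm (infinite (fun n => D n /\ M' n)) then (fun n => D n /\ M' n)
  else if xm (infinite (fun n => D n /\ ~ M' n)) then (fun n => D n /\ ~ M' n)
  else (fun _ => True).

Lemma Z1_inf M' : Mid M' -> infinite (Z1 M').
Proof.
  intros HM. unfold Z1. destruct (xm (ssub I M')) as [HI|nHI].
  - intros Hf. apply (ns1 M' HM HI). apply ns2; auto.
    apply (fin_cover _ (fun x => I x /\ ~ M' x) (fun n => D n /\ ~ M' n)); auto.
    intros x [Xx nM]. destruct (classic (I x)); [left|right]; unfold D; tauto.
  - destruct (xm _); auto. destruct (xm _); auto. apply nat_inf.
Qed.

Definition Mof (S : pset nat) : pset nat := fun n => I n \/ (D n /\ S n).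

Lemma Mof_sub S : subset I (Mof S) /\ subset (Mof S) X.
Proof. split; intros x; [left; auto | intros [h|[[h _] _]]; auto]. Qed.

Lemma ifc (A B : pset nat) : infinite A -> fin B -> (forall x, A x -> B x) -> False.
Proof. intros HA HB H. apply HA. exact (fin_mono _ _ H HB). Qed.

Lemma M_good S M' : Mid M' -> splits S (Z1 M') -> incomp (Mof S) M' /\ cfree (Mof S) M'.
Proof.
  intros HM [sp1 sp2]. unfold Z1 in sp1, sp2. unfold Mof.
  destruct (xm (ssub I M')) as [HI|nHI].
  - split; [split|].
    + intros h. apply (ifc _ _ sp1 h). intros x [[Dx nM] Sx]. split; [right; auto | auto].
    + intros h. apply (ns1 M' HM HI). apply (ssub_trans _ (Mof S)); auto.
      apply ssub_of_sub. apply Mof_sub.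
    + intros [_ h2]. apply (ifc _ _ sp2 h2).
      intros x [[[Xx nIx] nM] nS]. split; [intros [Ix|[_ Sx]]; auto|auto].
  - split; [split|].
    + intros h. apply nHI. apply (ssub_trans _ (Mof S)); auto. apply ssub_of_sub. apply Mof_sub.
    + intros h.
      assert (MX : ssub M' X).
      { apply (ssub_trans _ (Mof S)); auto. apply ssub_of_sub. apply Mof_sub. }
      assert (DIinf : infinite (fun n => D n /\ M' n)).
      { intros hf. apply nHI. apply ns3; auto.
        apply (fin_cover _ (fun x => M' x /\ ~ X x) (fun n => D n /\ M' n)); auto.
        intros x [Mx nIx]. destruct (classic (X x)); [right; unfold D; tauto | left; tauto]. }
      destruct (xm (infinite (fun n => D n /\ M' n))) as [_|n]; [|contradiction].
      apply (ifc _ _ sp2 h).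
      intros x [[Dx Mx] nS]. split; auto. intros [Ix|[_ Sx]]; [apply Dx; auto| auto].
    + intros [h1 h2].
      destruct (xm (infinite (fun n => D n /\ M' n))) as [DI|nDI].
      { apply (ifc _ _ sp1 h1). intros x [[Dx Mx] Sx]. split; [right; auto|auto]. }
      destruct (xm (infinite (fun n => D n /\ ~ M' n))) as [Dm|nDm].
      { apply (ifc _ _ sp2 h2).
        intros x [[Dx nMx] nS]. split; [intros [Ix|[_ Sx]]; [apply Dx; auto|auto] | auto]. }
      apply NNPP in nDI. apply NNPP in nDm.
      assert (finD : fin D).
      { apply (fin_cover _ (fun n => D n /\ M' n) (fun n => D n /\ ~ M' n)); auto.
        intros x Dx. destruct (classic (M' x)); tauto. }
      assert (cI : ssub (compl M') I).
      { unfold ssub, compl. apply (fin_cover _ D (fun x => ~ (I x \/ D x /\ S x) /\ ~ M' x)); [|exact finD|exact h2].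
        intros x [nM nI]. destruct (classic (I x \/ D x /\ S x)) as [hM|hM].
        - left. destruct hM as [Ix|[Dx _]]; [contradiction|exact Dx].
        - right. tauto. }
      assert (Ic : ssub I (compl M')).
      { unfold ssub, compl. apply (fin_mono _ (fun x => (I x \/ D x /\ S x) /\ M' x)); [|exact h1].
        intros x [Ix nnM]. split; [left; auto | apply NNPP; auto]. }
      assert (XI : ssub X I) by exact finD.
      assert (IX : ssub I X) by (apply ssub_of_sub; auto).
      destruct (Hwit M' HM) as [W [HW [[c1 c2]|[c1 c2]]]].
      * apply Hns; right; right; exists W; split; auto; split.
        -- apply (ssub_trans _ (compl M')); auto.
        -- intro h. apply c2. apply (ssub_trans _ I); auto.
      * apply Hns; right; left; exists W; split; auto; split.
        -- apply (ssub_trans _ I); auto. apply (ssub_trans _ (compl M')); auto.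
        -- intro h. apply c2. apply (ssub_trans _ X); auto. apply (ssub_trans _ I); auto.
Qed.


Lemma step_exists : exists p, good Mid I X p.
Proof.
  destruct (splitter Hr {Z | Mid Z} (fun z => Z1 (proj1_sig z)) Hsm
              (fun z => Z1_inf _ (proj2_sig z))) as [S HS].
  set (M := Mof S).
  assert (HMg : forall M', Mid M' -> incomp M M' /\ cfree M M').
  { intros M' HM'. apply M_good; auto. exact (HS (exist _ M' HM')). }
  destruct (Mof_sub S) as [IM MX].
  assert (P0m : Mid P0) by (apply Hseed; left; auto).
  assert (Minf : infinite (fun x => M x /\ ~ P0 x)) by exact (proj1 (proj1 (HMg P0 P0m))).
  destruct (classic (exists M', Mid M' /\ ssub (compl M) M')) as [[M' [HM' HQ]]|nQ].
  - exists (M, M). unfold good; simpl.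
    assert (wM : witness (addp Mid M M) M).
    { exists M'. split; [left; auto|right]. split; auto. intro h.
      apply (proj2 (HMg M' HM')). split; [|exact HQ].
      apply (fin_mono _ _ (fun x hx => conj (proj2 hx) (fun hn => hn (proj1 hx))) h). }
    split; [auto|]. split; [auto|].
    split; [intros M0 H0; destruct (HMg M0 H0) as [[a b] c]; repeat split; auto|].
    split; [left; reflexivity|]. split; [apply cfree_refl|]. split; exact wM.
  - assert (nQ' : forall M', Mid M' -> infinite (fun n => compl M n /\ ~ M' n)).
    { intros M' HM' h. apply nQ. eauto. }
    set (Q := compl M).
    set (A2 := fun o : option ({Z | Mid Z} * bool) => match o with
       | None => Q
       | Some (z, true) => (fun n => Q n /\ ~ proj1_sig z n)
       | Some (z, false) => if xm (infinite (fun n => proj1_sig z n /\ Q n))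
                             then (fun n => proj1_sig z n /\ Q n) else (fun _ => True)
       end).
    assert (A2inf : forall o, infinite (A2 o)).
    { intros [[[z hz] [|]]|]; simpl.
      - apply nQ'; auto.
      - destruct (xm _); auto. apply nat_inf.
      - apply (inf_mono _ _ (fun x h => proj1 h) (nQ' P0 P0m)). }
    destruct (splitter Hr _ A2 (small_option _ (small_prodb _ Hsm)) A2inf) as [S2 HS2].
    set (M2 := fun n => Q n /\ S2 n).
    assert (spN := HS2 None). simpl in spN. destruct spN as [spN1 spN2].
    assert (QS : infinite (fun n => Q n /\ ~ S2 n)) by exact spN2.
    exists (M, M2). unfold good; simpl.
    assert (M2M : forall x, M2 x -> ~ M x) by (intros x [h _]; exact h).
    split; [auto|]. split; [auto|]. split; [|split; [|split; [|split]]].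
    + intros M' HM'. destruct (HMg M' HM') as [[i1 i2] cf]. repeat split; auto.
      * destruct (HS2 (Some (exist _ M' HM', true))) as [sp1 _]. simpl in sp1.
        intro h. apply (ifc _ _ sp1 h). intros x [[Qx nM] Sx]. split; [split; auto|auto].
      * destruct (HS2 (Some (exist _ M' HM', false))) as [sp1 sp2]. simpl in sp1, sp2.
        destruct (xm (infinite (fun n => M' n /\ Q n))) as [hi|hn].
        -- intro h. apply (ifc _ _ sp2 h). intros x [[Mx Qx] nS]. split; auto. intros [_ h2]; auto.
        -- intro h. apply NNPP in hn. apply (mid_inf M' HM').
           apply (fin_cover M' (fun x => M' x /\ ~ M2 x) (fun x => M' x /\ Q x)); [|exact h|exact hn].
           intros x Mx. destruct (classic (M x)) as [Mx'|nMx].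
           ++ left. split; [exact Mx| intro h2; exact (M2M x h2 Mx')].
           ++ right. split; auto.
      * destruct (HS2 (Some (exist _ M' HM', true))) as [_ sp2]. simpl in sp2.
        intros [_ h2]. apply (ifc _ _ sp2 h2). intros x [[Qx nM] nS]. split; auto.
        intros [_ Sx]; auto.
    + right. split.
      * intro h. apply (ifc _ _ Minf h). intros x [Mx _]. split; auto. intro h2. apply (M2M x h2 Mx).
      * intro h. apply (ifc _ _ spN1 h). intros x [Qx Sx]. split; [split; auto| exact Qx].
    + intros [_ h2]. apply (ifc _ _ QS h2). intros x [Qx nS]. split; [exact Qx| intros [_ Sx]; auto].
    + exists M2. split; [right; right; reflexivity|left]. split.
      * apply ssub_of_sub. intros x [Qx _]. exact Qx.
      * intro h. apply (ifc _ _ QS h). intros x [Qx nS]. split; [exact Qx| intros [_ Sx]; auto].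
    + exists M. split; [right; left; reflexivity| left]. split.
      * apply ssub_of_sub. intros x Mx h2. exact (M2M x h2 Mx).
      * intro h. apply (ifc _ _ QS h). intros x [Qx nS]. split; [intros [_ Sx]; auto | exact Qx].
Qed.

End Step.

Lemma witness_mono (M1 M2 : pset (pset nat)) A :
  (forall Z, M1 Z -> M2 Z) -> witness M1 A -> witness M2 A.
Proof. intros H [W [HW h]]. exists W. split; auto. Qed.

Lemma sat_mono (M1 M2 : pset (pset nat)) I X :
  (forall Z, M1 Z -> M2 Z) -> sat M1 I X -> sat M2 I X.
Proof.
  intros H [[M [h1 h2]]|[[M [h1 h2]]|[M [h1 h2]]]]; [left|right;left|right;right]; exists M; auto.
Qed.

Lemma seed_witness Z : seed Z -> witness seed Z.
Proof.
  unfold witness, compl.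
  intros [ -> | [ -> | [ -> | -> ] ] ].
  - exists P1. split; [unfold seed; auto|left]. split.
    + apply ssub_of_sub. intros n h. unfold P0, P1 in *. lia.
    + apply (ssub_res _ _ 4); [lia| intros n Hn; unfold P0, P1; lia].
  - exists P0. split; [unfold seed; auto|left]. split.
    + apply ssub_of_sub. intros n h. unfold P0, P1 in *. lia.
    + apply (ssub_res _ _ 4); [lia| intros n Hn; unfold P0, P1; lia].
  - exists C1. split; [unfold seed; auto|right]. split.
    + apply ssub_of_sub. intros n h. unfold C0, C1 in *.
      pose proof (Nat.mod_upper_bound n 6 ltac:(lia)). lia.
    + apply (ssub_res _ _ 4); [lia| intros n Hn; unfold C0, C1; lia].
  - exists C0. split; [unfold seed; auto|right]. split.
    + apply ssub_of_sub. intros n h. unfold C0, C1 in *.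
      pose proof (Nat.mod_upper_bound n 6 ltac:(lia)). lia.
    + apply (ssub_res _ _ 4); [lia| intros n Hn; unfold C0, C1; lia].
Qed.

Lemma wf_min (T : Type) (lt : T -> T -> Prop) : well_founded lt ->
  forall P : T -> Prop, (exists x, P x) -> exists x, P x /\ forall y, lt y x -> ~ P y.
Proof.
  intros Hwf P [x Px]. apply NNPP. intro hn. revert Px. pattern x.
  apply (well_founded_ind Hwf). intros z IH Pz. apply hn. exists z. split; auto.
Qed.

Definition unpair (A : pset nat) : pset nat * pset nat :=
  (fun n => A (2 * n), fun n => A (S (2 * n))).

Lemma unpair_pr I X : unpair (pr I X) = (I, X).
Proof.
  unfold unpair. f_equal; apply functional_extensionality; intro n; [apply pr_l | apply pr_r].
Qed.

Lemma tasks (lt : pset nat -> pset nat -> Prop) : well_founded lt ->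
  exists g : pset nat -> pset nat * pset nat, forall t, exists y, small {k | lt k y} /\ g y = t.
Proof.
  intros Hwf.
  destruct (classic (forall y, small {k | lt k y})) as [Hall|Hn].
  - exists unpair. intros [I X]. exists (pr I X). split; auto. apply unpair_pr.
  - apply not_all_ex_not in Hn.
    destruct (wf_min _ lt Hwf _ Hn) as [x0 [Hx0 Hmin]].
    apply NNPP in Hx0. destruct Hx0 as [f Hf].
    exists (fun y => unpair (epsilon (inhabits (fun _ : nat => False)) (fun A => proj1_sig (f A) = y))).
    intros [I X]. exists (proj1_sig (f (pr I X))). split.
    + apply NNPP. apply Hmin. exact (proj2_sig (f (pr I X))).
    + set (A' := epsilon _ _).
      assert (E : proj1_sig (f A') = proj1_sig (f (pr I X))).
      { unfold A'. apply (epsilon_spec (inhabits (fun _ : nat => False))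
          (fun A => proj1_sig (f A) = proj1_sig (f (pr I X)))). eauto. }
      assert (f A' = f (pr I X)).
      { destruct (f A') as [a pa], (f (pr I X)) as [b pb]. simpl in E. subst b.
        f_equal. apply proof_irrelevance. }
      apply Hf in H. rewrite H. apply unpair_pr.
Qed.

Section Rec.
Hypothesis Hr : reaping_eq_continuum.
Variable lt : pset nat -> pset nat -> Prop.
Hypothesis Hwf : well_founded lt.
Hypothesis Htr : forall x y z, lt x y -> lt y z -> lt x z.
Hypothesis Htot : forall x y, lt x y \/ x = y \/ lt y x.
Variable g : pset nat -> pset nat * pset nat.
Hypothesis Hg : forall t, exists y, small {k | lt k y} /\ g y = t.

Definition MidOf y (f : forall k, lt k y -> option (pset nat * pset nat)) : pset (pset nat) :=
  fun Z => seed Z \/ exists k (h : lt k y) p, f k h = Some p /\ (Z = fst p \/ Z = snd p).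

Definition active (Mid : pset (pset nat)) y : Prop :=
  small {k | lt k y} /\ subset (fst (g y)) (snd (g y)) /\ ~ sat Mid (fst (g y)) (snd (g y)).

Definition stepF y (f : forall k, lt k y -> option (pset nat * pset nat)) : option (pset nat * pset nat) :=
  if xm (active (MidOf y f) y)
  then Some (epsilon (inhabits (P0, P0)) (good (MidOf y f) (fst (g y)) (snd (g y))))
  else None.

Definition Rr := Fix Hwf (fun _ => option (pset nat * pset nat)) stepF.

Lemma Rr_eq y : Rr y = stepF y (fun k _ => Rr k).
Proof.
  unfold Rr. refine (Fix_eq Hwf (fun _ => option (pset nat * pset nat)) stepF _ y).
  intros x f1 f2 H.
  assert (f1 = f2) by (apply functional_extensionality_dep; intro k;
                       apply functional_extensionality_dep; intro h; apply H).
  subst. reflexivity.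
Qed.

Definition Mid y := MidOf y (fun k _ => Rr k).

Definition seedf (b1 b2 : bool) : pset nat :=
  if b1 then (if b2 then P0 else P1) else (if b2 then C0 else C1).

Lemma Mid_mono k y : lt k y -> forall Z, Mid k Z -> Mid y Z.
Proof.
  intros h Z [s|[k' [h' [p [E HZ]]]]]; [left; auto|right].
  exists k', (Htr _ _ _ h' h), p. auto.
Qed.

Lemma Rr_good : forall y, (forall p, Rr y = Some p -> active (Mid y) y /\ good (Mid y) (fst (g y)) (snd (g y)) p)
                          /\ (Rr y = None -> ~ active (Mid y) y).
Proof.
  intro y. induction y as [y IH] using (well_founded_ind Hwf).
  rewrite Rr_eq. unfold stepF. fold (Mid y).
  destruct (xm (active (Mid y) y)) as [Ha|Hna]; [|split; [discriminate| intros _; exact Hna]].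
  split; [|discriminate]. intros p E. injection E as E. subst p. split; auto.
  apply epsilon_spec. destruct Ha as [Hs [HIX Hns]].
  apply (step_exists Hr); auto.
  - intros Z HZ. left. auto.
  - apply (small_cover _ (fun c : option {k | lt k y} * bool * bool => match c with
       | (None, b1, b2) => seedf b1 b2
       | (Some k, b1, _) => match Rr (proj1_sig k) with
                            | Some p => if b1 then fst p else snd p
                            | None => P0 end end)).
    + apply small_prodb, small_prodb, small_option, Hs.
    + intros Z [s|[k [h [p [E HZ]]]]].
      * destruct s as [ -> | [ -> | [ -> | -> ] ] ].
        -- exists (None, true, true). reflexivity.
        -- exists (None, true, false). reflexivity.
        -- exists (None, false, true). reflexivity.
        -- exists (None, false, false). reflexivity.
      * destruct HZ as [->| ->]; [exists (Some (exist _ k h), true, true) | exists (Some (exist _ k h), false, true)];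
        simpl; rewrite E; reflexivity.
  - intros M' [s|[k [h [p [E HZ]]]]].
    + apply (witness_mono seed); [intros Z sZ; left; auto|]. apply seed_witness; auto.
    + destruct (proj1 (IH k h) p E) as [_ Hgood].
      destruct Hgood as [_ [_ [_ [_ [_ [w1 w2]]]]]].
      assert (sub : forall Z, addp (Mid k) (fst p) (snd p) Z -> Mid y Z).
      { intros Z [HZ'|[->| ->]]; [apply (Mid_mono k y h); auto | right; exists k, h, p; auto | right; exists k, h, p; auto]. }
      destruct HZ as [->| ->]; apply (witness_mono _ _ _ sub); auto.
Qed.


Definition Fam : pset (pset nat) :=
  fun Z => seed Z \/ exists k p, Rr k = Some p /\ (Z = fst p \/ Z = snd p).

Lemma step_inv k p M' : Rr k = Some p -> Mid k M' ->
  incomp (fst p) M' /\ cfree (fst p) M' /\ incomp (snd p) M' /\ cfree (snd p) M'.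
Proof. intros E HM. destruct (proj1 (Rr_good k) p E) as [_ [_ [_ [H _]]]]. auto. Qed.

Lemma step_pair k p : Rr k = Some p -> (snd p = fst p \/ incomp (fst p) (snd p)) /\ cfree (fst p) (snd p).
Proof. intros E. destruct (proj1 (Rr_good k) p E) as [_ [_ [_ [_ [H1 [H2 _]]]]]]. auto. Qed.

Lemma mid_of k p Z : Rr k = Some p -> (Z = fst p \/ Z = snd p) -> forall y, lt k y -> Mid y Z.
Proof. intros E HZ y h. right. exists k, h, p. auto. Qed.

Lemma step_vs k p Z W : Rr k = Some p -> (Z = fst p \/ Z = snd p) -> Mid k W ->
  incomp Z W /\ cfree Z W.
Proof.
  intros E HZ HW. destruct (step_inv k p W E HW) as [a [b [c d]]].
  destruct HZ as [->| ->]; auto.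
Qed.

Lemma Fam_pairs (Q : pset nat -> pset nat -> Prop) :
  (forall A B, seed A -> seed B -> Q A B) ->
  (forall A B, incomp A B -> cfree A B -> Q A B) ->
  (forall A B, incomp B A -> cfree B A -> Q A B) ->
  (forall k p A B, Rr k = Some p -> (A = fst p \/ A = snd p) -> (B = fst p \/ B = snd p) -> Q A B) ->
  forall A B, Fam A -> Fam B -> Q A B.
Proof.
  intros Hs H1 H2 Hsame A B [sA|[k [p [E HA]]]] [sB|[k' [p' [E' HB]]]].
  - auto.
  - apply H2; apply (step_vs k' p' B A E' HB); left; auto.
  - apply H1; apply (step_vs k p A B E HA); left; auto.
  - destruct (Htot k k') as [h|[h|h]].
    + apply H2; apply (step_vs k' p' B A E' HB); apply (mid_of k p A E HA k' h).
    + subst k'. rewrite E in E'. injection E' as E'. subst p'. eapply Hsame; eauto.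
    + apply H1; apply (step_vs k p A B E HA); apply (mid_of k' p' B E' HB k h).
Qed.

Lemma Fam_antichain A B : Fam A -> Fam B -> ssub A B -> A = B.
Proof.
  apply (Fam_pairs (fun A B => ssub A B -> A = B)).
  - apply seed_antichain.
  - intros A0 B0 [h _] _ hs. contradiction.
  - intros A0 B0 [_ h] _ hs. contradiction.
  - intros k p A0 B0 E HA HB hs. destruct (step_pair k p E) as [[e|[i1 i2]] _].
    + destruct HA as [->| ->]; destruct HB as [->| ->]; rewrite ?e; auto.
    + destruct HA as [->| ->]; destruct HB as [->| ->]; auto; contradiction.
Qed.

Lemma Fam_cfree A B : Fam A -> Fam B -> cfree A B.
Proof.
  apply (Fam_pairs cfree).
  - apply seed_cfree.
  - intros A0 B0 _ h. exact h.
  - intros A0 B0 _ h. apply cfree_sym, h.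
  - intros k p A0 B0 E HA HB. destruct (step_pair k p E) as [_ cf].
    destruct HA as [->| ->]; destruct HB as [->| ->]; auto using cfree_refl, cfree_sym.
Qed.

Lemma Fam_sat I X : subset I X -> sat Fam I X.
Proof.
  intros HIX. destruct (Hg (I, X)) as [y [Hs Ey]].
  destruct (Rr y) as [p|] eqn:E.
  - destruct (proj1 (Rr_good y) p E) as [_ [H1 [H2 _]]]. rewrite Ey in H1, H2. simpl in H1, H2.
    left. exists (fst p). split; [right; exists y, p; auto|].
    split; apply ssub_of_sub; auto.
  - pose proof (proj2 (Rr_good y) E) as Hn. unfold active in Hn. rewrite Ey in Hn. simpl in Hn.
    apply (sat_mono (Mid y)).
    + intros Z [s|[k [h [p [E' HZ]]]]]; [left; auto| right; exists k, p; auto].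
    + apply NNPP. intro ns. apply Hn. auto.
Qed.

End Rec.

Theorem theorem5p1 :
  reaping_eq_continuum ->
  exists U : pset (pset nat),
    is_matroid U /\ uniform U /\
    has_packing (fun _ : bool => U) /\
    has_covering (fun _ : bool => U) /\
    ~ has_partitioning (fun _ : bool => U).
Proof.
  intros H. destruct WOM.WO as [lt [Hwf [Htr Htot]]].
  destruct (tasks lt Hwf) as [g Hg].
  eapply (mat_main (Fam lt Hwf g)).
  - intros Z sZ. left. exact sZ.
  - intros A B HA HB. eapply Fam_antichain; eauto.
  - intros A B HA HB. eapply Fam_cfree; eauto.
  - intros I X HIX. eapply Fam_sat; eauto.
Qed.
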